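(* There exist a single-item, 2-bidder interdependent-values setting whose valuation profile is $c$-single-crossing for some constant $c\ge1$, and a signal profile $\mathbf s$, such that every auction that allocates the item to a highest-valued bidder and charges the winner $w$ at most $v_w(\mathbf b)$ (her value evaluated at the reported bid profile $\mathbf b$) admits no pure Nash equilibrium at $\mathbf s$ under the no-overbidding assumption.
   Context: Single-item interdependent-values setting: bidders $i\in\{1,\dots,n\}$ have private signals $s_i\in S_i\subseteq\mathbb R_{\ge0}$ (here $S_i$ are intervals); valuations $v_i:S_1\times\dots\times S_n\to\mathbb R_{\ge0}$ are publicly known, weakly increasing in every coordinate and strictly increasing in $s_i$. The profile is $c$-single-crossing ($c\ge1$) if for all bidders $i,i'$, all $\mathbf s$ and all $\delta\ge0$, $c\,(v_i(s_i+\delta,\mathbf s_{-i})-v_i(\mathbf s))\ge v_{i'}(s_i+\delta,\mathbf s_{-i})-v_{i'}(\mathbf s)$. An auction solicits bids (reported signals) $b_i\in S_i$, allocates the item to some bidder in $\arg\max_j v_j(\mathbf b)$ (ties arbitrary), charges the winner $w$ a payment $p_w(\mathbf b)$, and losing bidders pay nothing. Utility: $u_i(\mathbf b;\mathbf s)=x_i(\mathbf b)v_i(\mathbf s)-p_i(\mathbf b)$. A pure Nash equilibrium at $\mathbf s$ under no-overbidding is a bid profile $\mathbf b$ with $b_i\le s_i$ for all $i$ such that no bidder $i$ has a bid $b_i'\in S_i$ with $b_i'\le s_i$ and $u_i((b_i',\mathbf b_{-i});\mathbf s)>u_i(\mathbf b;\mathbf s)$. *)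

(* Defs.v *)
From Stdlib Require Import Reals Lra.
Open Scope R_scope.

Inductive bidder : Type := B1 | B2.

Definition bidder_eq_dec (i j : bidder) : {i = j} + {i <> j}.
Proof. decide equality. Defined.

Definition profile := bidder -> R.

Definition upd (s : profile) (i : bidder) (x : R) : profile :=
  fun j => if bidder_eq_dec j i then x else s j.

Definition is_interval (A : R -> Prop) : Prop :=
  (exists x, A x) /\
  (forall x y z, A x -> A z -> x <= y -> y <= z -> A y).

Definition signal_spaces_ok (S : bidder -> R -> Prop) : Prop :=
  forall i, is_interval (S i) /\ (forall x, S i x -> 0 <= x).

Definition in_S (S : bidder -> R -> Prop) (s : profile) : Prop :=
  forall i, S i (s i).

Definition valuations_ok (S : bidder -> R -> Prop) (v : bidder -> profile -> R) : Prop :=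
  (forall i s, in_S S s -> 0 <= v i s) /\
  (forall i j s x, in_S S s -> S j x -> s j <= x -> v i s <= v i (upd s j x)) /\
  (forall i s x, in_S S s -> S i x -> s i < x -> v i s < v i (upd s i x)).

Definition single_crossing (c : R) (S : bidder -> R -> Prop) (v : bidder -> profile -> R) : Prop :=
  forall i i' s d, in_S S s -> 0 <= d -> S i (s i + d) ->
    c * (v i (upd s i (s i + d)) - v i s) >= v i' (upd s i (s i + d)) - v i' s.

(* An auction: allocation rule (the winner) and the winner's payment,
   both functions of the bid profile; losers pay nothing. *)
Definition auction_ok (S : bidder -> R -> Prop) (v : bidder -> profile -> R)
    (win : profile -> bidder) (pay : profile -> R) : Prop :=
  forall b, in_S S b ->
    (forall j, v j b <= v (win b) b) /\ pay b <= v (win b) b.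

Definition utility (v : bidder -> profile -> R)
    (win : profile -> bidder) (pay : profile -> R)
    (i : bidder) (b s : profile) : R :=
  if bidder_eq_dec (win b) i then v i s - pay b else 0.

Definition pure_NE_no_overbidding (S : bidder -> R -> Prop) (v : bidder -> profile -> R)
    (win : profile -> bidder) (pay : profile -> R) (s b : profile) : Prop :=
  in_S S b /\ (forall i, b i <= s i) /\
  (forall i x, S i x -> x <= s i ->
     ~ (utility v win pay i (upd b i x) s > utility v win pay i b s)).

(* Main.v *)
From Pilot Require Import Defs.
From Stdlib Require Import Reals.
From Stdlib Require Import Lra Psatz.
Import Pilot.Defs.
Open Scope R_scope.

Definition ff (t : R) : R := 4 * (t * t * t) - t.

Definition VV (i : bidder) (p : profile) : R :=
  match i with
  | B1 => 10 + 12 * (p B1 + p B2) + ff (p B1 - p B2)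
  | B2 => 10 + 12 * (p B1 + p B2) - ff (p B1 - p B2)
  end.

Definition SS (i : bidder) (x : R) : Prop := 0 <= x <= 1.

Lemma ff_bound t : -1 <= t <= 1 -> -3 <= ff t <= 3.
Proof.
  intros H. unfold ff.
  assert (0 <= t * t <= 1) by nra.
  split; nra.
Qed.

Lemma ff_diff a b : -1 <= a <= 1 -> -1 <= b <= 1 -> a <= b ->
  -(b - a) <= ff b - ff a <= 11 * (b - a).
Proof.
  intros Ha Hb Hab. unfold ff.
  assert (E : 4 * (b * b * b) - b - (4 * (a * a * a) - a)
              = (b - a) * (4 * (a * a + a * b + b * b) - 1)) by ring.
  rewrite E.
  assert (0 <= a * a + a * b + b * b) by nra.
  assert (a * a + a * b + b * b <= 3) by nra.
  split; nra.
Qed.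

Lemma upd11 (p : profile) x : upd p B1 x B1 = x. Proof. reflexivity. Qed.
Lemma upd12 (p : profile) x : upd p B1 x B2 = p B2. Proof. reflexivity. Qed.
Lemma upd21 (p : profile) x : upd p B2 x B1 = p B1. Proof. reflexivity. Qed.
Lemma upd22 (p : profile) x : upd p B2 x B2 = x. Proof. reflexivity. Qed.

Theorem mainTheorem3 :
  exists (S : bidder -> R -> Prop) (v : bidder -> profile -> R) (c : R) (s : profile),
    signal_spaces_ok S /\ valuations_ok S v /\ 1 <= c /\ single_crossing c S v /\
    in_S S s /\
    forall (win : profile -> bidder) (pay : profile -> R),
      auction_ok S v win pay ->
      ~ (exists b : profile, pure_NE_no_overbidding S v win pay s b).
Proof.
  exists SS, VV, 23, (fun _ => 1).
  split; [| split; [| split; [| split; [| split]]]].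
  - intros i; unfold is_interval, SS; split; [split|].
    + exists 0; lra.
    + intros x y z; lra.
    + intros x; lra.
  - split; [| split].
    + intros i p Hp. pose proof (Hp B1) as H1; pose proof (Hp B2) as H2; unfold SS in *.
      pose proof (ff_bound (p B1 - p B2)) as Hf.
      destruct i; simpl; lra.
    + intros i j p x Hp Hx Hle. pose proof (Hp B1) as H1; pose proof (Hp B2) as H2; unfold SS in *.
      destruct j.
      * pose proof (ff_diff (p B1 - p B2) (x - p B2)) as Hf.
        destruct i; simpl; rewrite ?upd11, ?upd12; lra.
      * pose proof (ff_diff (p B1 - x) (p B1 - p B2)) as Hf.
        destruct i; simpl; rewrite ?upd21, ?upd22; lra.
    + intros i p x Hp Hx Hle. pose proof (Hp B1) as H1; pose proof (Hp B2) as H2; unfold SS in *.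
      destruct i.
      * pose proof (ff_diff (p B1 - p B2) (x - p B2)) as Hf.
        simpl; rewrite ?upd11, ?upd12; lra.
      * pose proof (ff_diff (p B1 - x) (p B1 - p B2)) as Hf.
        simpl; rewrite ?upd21, ?upd22; lra.
  - lra.
  - intros i i' p d Hp Hd Hx. pose proof (Hp B1) as H1; pose proof (Hp B2) as H2; unfold SS in *.
    destruct i.
    + pose proof (ff_diff (p B1 - p B2) (p B1 + d - p B2)) as Hf.
      destruct i'; simpl; rewrite ?upd11, ?upd12; lra.
    + pose proof (ff_diff (p B1 - (p B2 + d)) (p B1 - p B2)) as Hf.
      destruct i'; simpl; rewrite ?upd21, ?upd22; lra.
  - intros i; unfold SS; lra.
  - intros win pay Hok [b [Hb [Hbs Hdev]]].
    pose proof (Hb B1) as H1; pose proof (Hb B2) as H2; unfold SS in *.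
    destruct (win b) eqn:Hw.
    +
      set (x := if Rle_dec (1/4) (b B1) then b B1 - 1/4 else b B1 + 3/4).
      assert (Hx : 0 <= x <= 1 /\ x < 1 /\ ff (b B1 - x) < 0 /\ -1 <= ff (b B1 - x) /\ b B1 + x <= 7/4).
      { unfold x; destruct (Rle_dec (1/4) (b B1)).
        - replace (b B1 - (b B1 - 1/4)) with (1/4) by ring. unfold ff. lra.
        - replace (b B1 - (b B1 + 3/4)) with (-(3/4)) by ring. unfold ff. lra. }
      destruct Hx as [Hx1 [Hx2 [Hx3 [Hx5 Hx4]]]].
      set (b' := upd b B2 x).
      assert (Hin : in_S SS b').
      { intros [|]; unfold b', SS; rewrite ?upd21, ?upd22; lra. }
      destruct (Hok b' Hin) as [Hmax Hpay].
      assert (Hw' : win b' = B2).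
      { specialize (Hmax B2). destruct (win b') eqn:E; [|reflexivity].
        exfalso. revert Hmax. unfold b'; simpl; rewrite upd21, upd22. lra. }
      apply (Hdev B2 x); [unfold SS; lra | lra |].
      unfold utility. fold b'. rewrite Hw, Hw'. simpl.
      rewrite Hw' in Hpay. revert Hpay. unfold b'; simpl; rewrite upd21, upd22.
      replace (1 - 1) with 0 by ring.
      assert (ff 0 = 0) by (unfold ff; ring).
      assert (-3 <= ff (b B1 - x) <= 3) by (apply ff_bound; lra).
      clearbody x b'. intros. lra.
    +
      set (y := if Rle_dec (1/4) (b B2) then b B2 - 1/4 else b B2 + 3/4).
      assert (Hy : 0 <= y <= 1 /\ y < 1 /\ ff (y - b B2) > 0 /\ ff (y - b B2) <= 1 /\ y + b B2 <= 7/4).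
      { unfold y; destruct (Rle_dec (1/4) (b B2)).
        - replace (b B2 - 1/4 - b B2) with (-(1/4)) by ring. unfold ff. lra.
        - replace (b B2 + 3/4 - b B2) with (3/4) by ring. unfold ff. lra. }
      destruct Hy as [Hy1 [Hy2 [Hy3 [Hy5 Hy4]]]].
      set (b' := upd b B1 y).
      assert (Hin : in_S SS b').
      { intros [|]; unfold b', SS; rewrite ?upd11, ?upd12; lra. }
      destruct (Hok b' Hin) as [Hmax Hpay].
      assert (Hw' : win b' = B1).
      { specialize (Hmax B1). destruct (win b') eqn:E; [reflexivity|].
        exfalso. revert Hmax. unfold b'; simpl; rewrite upd11, upd12. lra. }
      apply (Hdev B1 y); [unfold SS; lra | lra |].
      unfold utility. fold b'. rewrite Hw, Hw'. simpl.
      rewrite Hw' in Hpay. revert Hpay. unfold b'; simpl; rewrite upd11, upd12.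
      replace (1 - 1) with 0 by ring.
      assert (ff 0 = 0) by (unfold ff; ring).
      pose proof (ff_bound (y - b B2)). clearbody y b'. intros; lra.
Qed.
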